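(* Let $T$ be a first-order $\mathscr L$-theory and $A$ an existentially closed model of $T$. Then for every finite tuple of variables $\bar x$ and every finite $a$-type $\pi$ of $A[\bar x]$, $tp_a^A(\pi(A))=\sqrt[T]{\pi}$ (the strong $T$-radical of $\pi$).
   Context: $A$ is an existentially closed model of $T$ if every embedding of $A$ into a model of $T$ reflects existential sentences with parameters from $A$. $T_\forall$ is the set of consequences of $T$ of the form $\forall\bar y(\bigwedge\Phi\to\bigvee\Psi)$, $\Phi,\Psi$ finite sets of atomic formulas. $A[\bar x]$ is the $\mathscr L(A)$-structure freely generated over $A$ by $\bar x$ (quotient by the atomic diagram $D^+A$ of the term algebra of $\mathscr L\sqcup A\sqcup\bar x$), with canonical homomorphism $A\to A[\bar x]$; an $a$-type of $A[\bar x]$ is a set of atomic $\mathscr L(A)$-formulas in $\bar x$. An $a$-type $\pi$ of $A[\bar x]$ is closed if it contains every atomic formula implied by $D^+(A[\bar x])\cup\pi$; the quotient $A[\bar x]/\pi$ identifies two terms, and makes a relation hold, exactly when the corresponding atomic formula is so implied. $\pi$ is strongly $T$-prime if it is closed, $A[\bar x]/\pi\models T_\forall$, and the composite $A\to A[\bar x]\to A[\bar x]/\pi$ is an embedding. The strong radical $\sqrt[T]{\pi}$ is the intersection of all strongly $T$-prime $a$-types containing $\pi$. $\pi(A)=\{\bar a\in A^{|\bar x|}:A\models\bigwedge\pi(\bar a)\}$; for $S\subseteq A^{|\bar x|}$, $tp_a^A(S)$ is the set of atomic $\mathscr L(A)$-formulas $\phi(\bar x)$ with $A\models\phi(\bar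 a)$ for all $\bar a\in S$. *)

(* Defs.v *)
From mathcomp Require Import ssreflect ssrfun ssrbool eqtype ssrnat seq fintype.
From Stdlib Require Import ClassicalEpsilon.
From Stdlib Require List.

Set Implicit Arguments.
Unset Strict Implicit.
Unset Printing Implicit Defensive.

Record Lang := {
  fsym : Type;
  fari : fsym -> nat;
  rsym : Type;               (* relation symbols (equality is built in) *)
  rari : rsym -> nat }.

Section Syntax.
Variable L : Lang.

Inductive term (V : Type) : Type :=
  | tvar : V -> term V
  | tapp : forall f : fsym L, ('I_(fari f) -> term V) -> term V.

Inductive atom (V : Type) : Type :=
  | AEq : term V -> term V -> atom V
  | ARel : forall r : rsym L, ('I_(rari r) -> term V) -> atom V.

Inductive formula : Type :=
  | FAtom : atom nat -> formula
  | FFalse : formula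
  | FNot : formula -> formula
  | FAnd : formula -> formula -> formula
  | FOr : formula -> formula -> formula
  | FImp : formula -> formula -> formula
  | FAll : nat -> formula -> formula
  | FEx : nat -> formula -> formula.

Fixpoint qf (phi : formula) : Prop :=
  match phi with
  | FAtom _ | FFalse => True
  | FNot p => qf p
  | FAnd p q | FOr p q | FImp p q => qf p /\ qf q
  | FAll _ _ | FEx _ _ => False
  end.

Inductive existential : formula -> Prop :=
  | ex_qf phi : qf phi -> existential phi
  | ex_ex x phi : existential phi -> existential (FEx x phi).

End Syntax.

Arguments tvar {L V}.
Arguments FAtom {L}.

Record structure (L : Lang) := {
  carrier :> Type;
  funs : forall f : fsym L, ('I_(fari f) -> carrier) -> carrier;
  rels : forall r : rsym L, ('I_(rari r) -> carrier) -> Prop }.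

Section Semantics.
Variables (L : Lang) (M : structure L).

Fixpoint teval (V : Type) (v : V -> M) (t : term L V) : M :=
  match t with
  | tvar x => v x
  | tapp f ts => @funs L M f (fun i => teval v (ts i))
  end.

Definition asat (V : Type) (v : V -> M) (a : atom L V) : Prop :=
  match a with
  | AEq t s => teval v t = teval v s
  | ARel r ts => @rels L M r (fun i => teval v (ts i))
  end.

Definition upd (rho : nat -> M) (x : nat) (m : M) : nat -> M :=
  fun y => if y == x then m else rho y.

Fixpoint sat (rho : nat -> M) (phi : formula L) : Prop :=
  match phi with
  | FAtom a => asat rho a
  | FFalse => False
  | FNot p => ~ sat rho p
  | FAnd p q => sat rho p /\ sat rho q
  | FOr p q => sat rho p \/ sat rho q
  | FImp p q => sat rho p -> sat rho q
  | FAll x p => forall m : M, sat (upd rho x m) p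
  | FEx x p => exists m : M, sat (upd rho x m) p
  end.

End Semantics.

(* a theory is a set of formulas (sentences); a model of T is a
   (nonempty) structure satisfying every member of T (under every
   assignment, i.e. its universal closure). *)
Definition theory (L : Lang) := formula L -> Prop.

Definition model_of (L : Lang) (T : theory L) (M : structure L) : Prop :=
  inhabited M /\ forall phi, T phi -> forall rho : nat -> M, sat rho phi.

Definition embedding (L : Lang) (M N : structure L) (h : M -> N) : Prop :=
  injective h /\
  (forall f (ms : 'I_(fari f) -> M), h (@funs L M f ms) = @funs L N f (h \o ms)) /\
  (forall r (ms : 'I_(rari r) -> M), @rels L M r ms <-> @rels L N r (h \o ms)).

(* h reflects existential sentences with parameters from M: the
   parameters are given by the assignment rho. *)
Definition reflects_existential (L : Lang) (M N : structure L) (h : M -> N) :=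
  forall (phi : formula L) (rho : nat -> M),
    existential phi -> sat (h \o rho) phi -> sat rho phi.

Definition ec_model (L : Lang) (T : theory L) (A : structure L) : Prop :=
  model_of T A /\
  forall (B : structure L) (h : A -> B),
    model_of T B -> embedding h -> reflects_existential h.

(* A universal clause  forall y (/\ Phi -> \/ Psi)  with Phi, Psi finite
   lists of atomic formulas (variables nat). *)
Definition clause_holds (L : Lang) (M : structure L) (Phi Psi : seq (atom L nat)) :=
  forall rho : nat -> M,
    (forall a, List.In a Phi -> asat rho a) ->
    exists2 b, List.In b Psi & asat rho b.

Definition T_forall (L : Lang) (T : theory L) (Phi Psi : seq (atom L nat)) : Prop :=
  forall M : structure L, model_of T M -> clause_holds M Phi Psi.

Definition models_T_forall (L : Lang) (T : theory L) (M : structure L) : Prop :=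
  forall Phi Psi, T_forall T Phi Psi -> clause_holds M Phi Psi.

Section AType.
Variables (L : Lang) (A : structure L) (n : nat).

(* L(A)-terms / atomic L(A)-formulas in the variables x_0..x_{n-1}:
   variables inl a are the constants naming a : A, inr i is x_i. *)
Definition Vars := (carrier A + 'I_n)%type.
Definition aterm := term L Vars.
Definition aformula := atom L Vars.

Definition atype := aformula -> Prop.

(* the positive atomic diagram D+A, as a condition on a valuation of the
   constants naming elements of A *)
Definition sat_diagram (B : structure L) (v : Vars -> B) : Prop :=
  forall phi : atom L (carrier A),
    asat (@id (carrier A)) phi ->
    asat (fun a => v (inl a)) phi.

(* phi is implied by D+(A[x]) \cup pi, i.e. by D+A \cup pi *)
Definition implied (pi : atype) (phi : aformula) : Prop :=
  forall (B : structure L) (v : Vars -> B),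
    sat_diagram v -> (forall psi, pi psi -> asat v psi) -> asat v phi.

Definition closed_atype (pi : atype) : Prop :=
  forall phi, implied pi phi -> pi phi.

(* the quotient A[x]/pi: classes of terms modulo implied equality *)
Definition qeq (pi : atype) (t s : aterm) : Prop := implied pi (AEq t s).

Definition qcarrier (pi : atype) : Type :=
  { P : aterm -> Prop | exists t, P = qeq pi t }.

Definition qclass (pi : atype) (t : aterm) : qcarrier pi :=
  exist _ (qeq pi t) (ex_intro _ t erefl).

Definition qrep (pi : atype) (c : qcarrier pi) : aterm :=
  proj1_sig (constructive_indefinite_description _ (proj2_sig c)).

Definition quotient (pi : atype) : structure L := {|
  carrier := qcarrier pi;
  funs := fun f cs => qclass pi (@tapp L Vars f (fun i => qrep (cs i)));
  rels := fun r cs => implied pi (@ARel L Vars r (fun i => qrep (cs i))) |}.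

(* the composite A -> A[x] -> A[x]/pi *)
Definition qmap (pi : atype) (a : A) : quotient pi := qclass pi (tvar (inl a)).

Definition strongly_prime (T : theory L) (pi : atype) : Prop :=
  closed_atype pi /\ models_T_forall T (quotient pi) /\ embedding (@qmap pi).

Definition strong_radical (T : theory L) (pi : atype) : atype :=
  fun phi => forall p : atype,
    (forall psi, pi psi -> p psi) -> strongly_prime T p -> p phi.

Definition aval (abar : 'I_n -> A) : Vars -> A :=
  fun v => match v with inl a => a | inr i => abar i end.

Definition realizations (pi : atype) : ('I_n -> A) -> Prop :=
  fun abar => forall phi, pi phi -> asat (aval abar) phi.

Definition tp_a (S : ('I_n -> A) -> Prop) : atype :=
  fun phi => forall abar, S abar -> asat (aval abar) phi.

End AType.

(* Main.v *)
Require Import Defs.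
From mathcomp Require Import ssreflect ssrfun ssrbool eqtype ssrnat seq fintype.
From Stdlib Require List.
From mathcomp Require Import zify.
From Stdlib Require Import ClassicalEpsilon Classical FunctionalExtensionality PropExtensionality ProofIrrelevance.
From mathcomp Require classical_sets filter.
Set Implicit Arguments.
Unset Strict Implicit.
Section Gen.
Variable L : Lang.

Fixpoint map_term V W (f : V -> W) (t : term L V) : term L W :=
  match t with
  | tvar x => tvar (f x)
  | tapp g ts => tapp (fun j => map_term f (ts j))
  end.

Definition map_atom V W (f : V -> W) (a : atom L V) : atom L W :=
  match a with
  | AEq t s => AEq (map_term f t) (map_term f s)
  | ARel r ts => @ARel L W r (fun j => map_term f (ts j))
  end.

Lemma teval_map (M : structure L) V W (f : V -> W) (rho : W -> M) t :
  teval rho (map_term f t) = teval (rho \o f) t.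
Proof.
elim: t => [x|g ts IH] //=; congr (funs _); apply: functional_extensionality => j; exact: IH.
Qed.

Lemma asat_map (M : structure L) V W (f : V -> W) (rho : W -> M) a :
  asat rho (map_atom f a) <-> asat (rho \o f) a.
Proof.
case: a => [t s|r ts] /=; first by rewrite !teval_map.
have -> : (fun i => teval rho (map_term f (ts i))) = (fun i => teval (rho \o f) (ts i)) => //.
apply: functional_extensionality => j; exact: teval_map.
Qed.

Lemma teval_emb (M N : structure L) (h : M -> N) : embedding h ->
  forall V (rho : V -> M) t, teval (h \o rho) t = h (teval rho t).
Proof.
move=> [hi [hf hr]] V rho; elim => [x|g ts IH] //=.
rewrite hf; congr (funs _); apply: functional_extensionality => j; exact: IH.
Qed.

Lemma asat_emb (M N : structure L) (h : M -> N) : embedding h ->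
  forall V (rho : V -> M) a, asat (h \o rho) a <-> asat rho a.
Proof.
move=> he V rho [t s|r ts] /=.
  rewrite !(teval_emb he); split; [exact: (proj1 he)| by move->].
have -> : (fun i => teval (h \o rho) (ts i)) = h \o (fun i => teval rho (ts i)).
  apply: functional_extensionality => j /=; exact: (teval_emb he).
by split; move/(proj2 (proj2 he)).
Qed.

Fixpoint tall V (P : V -> Prop) (t : term L V) : Prop :=
  match t with
  | tvar x => P x
  | tapp g ts => forall j, tall P (ts j)
  end.

Definition aall V (P : V -> Prop) (a : atom L V) : Prop :=
  match a with
  | AEq t s => tall P t /\ tall P s
  | ARel r ts => forall j, tall P (ts j)
  end.

Lemma teval_ext (M : structure L) V (v w : V -> M) (P : V -> Prop) t :
  (forall x, P x -> v x = w x) -> tall P t -> teval v t = teval w t.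
Proof.
move=> vw; elim: t => [x|g ts IH] /=; first exact: vw.
move=> H; congr (funs _); apply: functional_extensionality => j; exact: IH.
Qed.

Lemma asat_ext (M : structure L) V (v w : V -> M) (P : V -> Prop) a :
  (forall x, P x -> v x = w x) -> aall P a -> (asat v a <-> asat w a).
Proof.
move=> vw; case: a => [t s|r ts] /=.
  by move=> [Ht Hs]; rewrite (teval_ext vw Ht) (teval_ext vw Hs).
move=> H.
have -> : (fun i => teval v (ts i)) = (fun i => teval w (ts i)) => //.
apply: functional_extensionality => j; exact: teval_ext vw (H j).
Qed.

Lemma In_enum (T : finType) (x : T) : List.In x (enum T).
Proof.
have : x \in enum T by rewrite mem_enum.
elim: (enum T) => //= y s IH; rewrite in_cons => /orP [/eqP ->|/IH]; by [left|right].
Qed.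

Section Consts.
Variables X Y : Type.

Fixpoint tconsts (t : term L (X + Y)) : seq X :=
  match t with
  | tvar (inl a) => [:: a]
  | tvar (inr _) => [::]
  | tapp g ts => List.flat_map (fun j => tconsts (ts j)) (enum 'I_(fari g))
  end.

Definition aconsts (a : atom L (X + Y)) : seq X :=
  match a with
  | AEq t s => tconsts t ++ tconsts s
  | ARel r ts => List.flat_map (fun j => tconsts (ts j)) (enum 'I_(rari r))
  end.

Definition inlP (cs : seq X) (x : X + Y) : Prop :=
  match x with inl a => List.In a cs | inr _ => True end.

Lemma tconsts_all cs t : (forall a, List.In a (tconsts t) -> List.In a cs) -> tall (inlP cs) t.
Proof.
elim: t => [[a|b]|g ts IH] /=; first by move=> H; apply: H; left.
  by [].
move=> H j; apply: IH => a Ha; apply: H; apply/List.in_flat_map; exists j; split => //.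
exact: In_enum.
Qed.

Lemma aconsts_all cs a : (forall x, List.In x (aconsts a) -> List.In x cs) -> aall (inlP cs) a.
Proof.
case: a => [t s|r ts] /= H.
  split; apply: tconsts_all => x Hx; apply: H; apply/List.in_or_app; by [left|right].
move=> j; apply: tconsts_all => x Hx; apply: H; apply/List.in_flat_map; exists j; split => //.
exact: In_enum.
Qed.

Fixpoint idx (cs : seq X) (a : X) : nat :=
  match cs with
  | [::] => 0
  | c :: cs => if excluded_middle_informative (a = c) then 0 else (idx cs a).+1
  end.

Lemma idx_lt cs a : List.In a cs -> idx cs a < size cs.
Proof.
elim: cs => //= c cs IH H; case: excluded_middle_informative => // ne.
by case: H => [E|/IH]; [ exfalso; apply: ne | ].
Qed.

Lemma nth_idx d cs a : List.In a cs -> nth d cs (idx cs a) = a.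
Proof.
elim: cs => //= c cs IH H; case: excluded_middle_informative => [E|ne]; first by simpl; symmetry.
by case: H => [E|/IH]; [ exfalso; apply: ne | ].
Qed.

End Consts.

Definition enc X n (cs : seq X) (x : X + 'I_n) : nat :=
  match x with inl a => idx cs a | inr i => size cs + i end.

Definition ext (M : Type) n N (b : 'I_n -> M) (d : nat -> M) : nat -> M :=
  fun y => if N <= y then (if @insub nat (fun k => k < n) _ (y - N) is Some i then b i else d y) else d y.

Lemma ext_in M n N b d (i : 'I_n) : @ext M n N b d (N + i) = b i.
Proof.
rewrite /ext leq_addr addKn; case: insubP => [j _ /val_inj ->//|]; by rewrite ltn_ord.
Qed.

Lemma ext_lt M n N b d y : y < N -> @ext M n N b d y = d y.
Proof. by rewrite /ext ltnNge => /negbTE ->. Qed.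

Lemma ext_ge M n N b d y : N + n <= y -> @ext M n N b d y = d y.
Proof.
move=> H; rewrite /ext; have -> : N <= y by lia.
case: insubP => // j; have : ~~ (y - N < n) by rewrite -leqNgt; lia.
by move/negbTE ->.
Qed.

Fixpoint conjs (l : seq (formula L)) : formula L :=
  match l with [::] => FNot (FFalse L) | f :: l => FAnd f (conjs l) end.

Lemma qf_conjs l : (forall f, List.In f l -> qf f) -> qf (conjs l).
Proof. elim: l => //= f l IH H; split; [apply: H; by left | apply: IH => g Hg; apply: H; by right]. Qed.

Lemma sat_conjs (M : structure L) (rho : nat -> M) l :
  sat rho (conjs l) <-> forall f, List.In f l -> sat rho f.
Proof.
elim: l => [|f l IH] /=; first by split => // _ [].
rewrite IH; split; first by move=> [H1 H2] g [<-|Hg]; [exact: H1|exact: H2].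
move=> H; split; [apply: H; left | move=> g Hg; apply: H; right] => //.
Qed.

Fixpoint exs (N k : nat) (phi : formula L) : formula L :=
  match k with 0 => phi | k.+1 => FEx (N + k) (exs N k phi) end.

Lemma exs_existential N k phi : qf phi -> existential (exs N k phi).
Proof. move=> q; elim: k => [|k IH] /=; [exact: ex_qf | exact: ex_ex]. Qed.

Lemma sat_exs (M : structure L) N k phi (rho : nat -> M) :
  sat rho (exs N k phi) <->
  exists w : nat -> M, (forall y, (y < N) || (N + k <= y) -> w y = rho y) /\ sat w phi.
Proof.
elim: k rho => [|k IH] rho /=.
  split; first by move=> H; exists rho.
  move=> [w [E H]]; have -> : rho = w => //.
  apply: functional_extensionality => y; rewrite E //; case: ltnP => //; by rewrite addn0.
split.
  move=> [m /IH [w [E H]]]; exists w; split => // y Hy; rewrite E.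
    rewrite /upd; case: eqP => // Ey; exfalso; move: Hy; rewrite Ey; case/orP; lia.
  move: Hy; case/orP => [->//|Hy]; apply/orP; right; lia.
move=> [w [E H]]; exists (w (N + k)); apply/IH; exists w; split => // y Hy.
rewrite /upd; case: eqP => [->//|ne]; apply: E.
case/orP: Hy => [->//|Hy]; apply/orP; right.
have : y <> N + k by move=> ?; apply: ne. lia.
Qed.

End Gen.
Record ultra (I : Type) (U : (I -> Prop) -> Prop) : Prop := {
  uT : U (fun _ => True);
  uS : forall X Y : I -> Prop, (forall i, X i -> Y i) -> U X -> U Y;
  uI : forall X Y : I -> Prop, U X -> U Y -> U (fun i => X i /\ Y i);
  uP : forall X, U X -> exists i, X i;
  uU : forall X, U X \/ U (fun i => ~ X i) }.

Lemma ultra_ext (I : Type) (B : (I -> Prop) -> Prop) :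
  (exists X, B X) ->
  (forall X Y, B X -> B Y -> exists Z, B Z /\ forall i, Z i -> X i /\ Y i) ->
  (forall X, B X -> exists i, X i) ->
  exists U : (I -> Prop) -> Prop, ultra U /\ forall X, B X -> U X.
Proof.
move=> [X0 BX0] BI BP.
pose F : classical_sets.set_system I := fun X => exists Z, B Z /\ forall i, Z i -> X i.
have FF : filter.ProperFilter F.
  constructor.
  - move=> [Z [BZ HZ]]; have [i Zi] := BP Z BZ; exact: (HZ i Zi).
  - constructor.
    + by exists X0; split.
    + move=> X Y [Z1 [B1 H1]] [Z2 [B2 H2]].
      have [Z [BZ HZ]] := BI _ _ B1 B2.
      exists Z; split => // i /HZ [/H1 ? /H2 ?]; by split.
    + move=> X Y XY [Z [BZ HZ]]; exists Z; split => // i /HZ; exact: XY.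
have [G [UG FG]] := filter.ultraFilterLemma FF.
exists G; split; last first.
  by move=> X BX; apply: FG; exists X; split.
have PG : filter.ProperFilter G := filter.ultra_proper.
have FiG : filter.Filter G := filter.filter_filter.
constructor.
- exact: filter.filterT.
- move=> X Y XY GX; exact: (filter.filterS XY GX).
- move=> X Y GX GY; exact: (filter.filterI GX GY).
- move=> X GX; apply: NNPP => nX; apply: (filter.filter_not_empty G).
  suff -> : (classical_sets.set0 : classical_sets.set I) = X by [].
  apply: functional_extensionality => i; apply: propositional_extensionality; split => //.
  move=> Xi; apply: nX; by exists i.
- move=> X; exact: (filter.in_ultra_setVsetC X UG).
Qed.

Section Compact.
Variables (L : Lang) (T : theory L) (V : Type).

Definition lit := (bool * atom L V)%type.
Definition lsat (M : structure L) (v : V -> M) (s : lit) : Prop :=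
  if s.1 then asat v s.2 else ~ asat v s.2.

Variable S : lit -> Prop.
Hypothesis Hfin : forall l : seq lit, (forall s, List.In s l -> S s) ->
  exists (B : structure L) (v : V -> B), model_of T B /\ forall s, List.In s l -> lsat v s.

Definition I := {l : seq lit | forall s, List.In s l -> S s}.

Definition Mi (i : I) : structure L :=
  proj1_sig (constructive_indefinite_description _ (Hfin (proj2_sig i))).
Lemma Mi_spec i : exists v : V -> Mi i, model_of T (Mi i) /\ forall s, List.In s (proj1_sig i) -> lsat v s.
Proof. exact: (proj2_sig (constructive_indefinite_description _ (Hfin (proj2_sig i)))). Qed.
Definition vi i : V -> Mi i := proj1_sig (constructive_indefinite_description _ (Mi_spec i)).
Lemma vi_spec i : model_of T (Mi i) /\ forall s, List.In s (proj1_sig i) -> lsat (@vi i) s.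
Proof. exact: (proj2_sig (constructive_indefinite_description _ (Mi_spec i))). Qed.
Lemma Mi_inh i : inhabited (Mi i).
Proof. by case: (vi_spec i) => [[]]. Qed.

Definition cone (l0 : seq lit) (i : I) : Prop := forall s, List.In s l0 -> List.In s (proj1_sig i).
Definition Bc (X : I -> Prop) : Prop := exists l0, (forall s, List.In s l0 -> S s) /\ X = cone l0.

Lemma ultra_ex : exists U : (I -> Prop) -> Prop, ultra U /\ forall X, Bc X -> U X.
Proof.
apply: ultra_ext.
- by exists (cone [::]); exists [::]; split.
- move=> X Y [l1 [H1 ->]] [l2 [H2 ->]]; exists (cone (l1 ++ l2)); split.
    exists (l1 ++ l2); split => // s Hs; case: (List.in_app_or _ _ _ Hs); [exact: H1|exact: H2].
  move=> i Hi; split => s Hs; apply: Hi; apply: List.in_or_app; by [left|right].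
- move=> X [l0 [H ->]]; by exists (exist _ l0 H).
Qed.

Definition U := proj1_sig (constructive_indefinite_description _ ultra_ex).
Lemma U_ultra : ultra U.
Proof. exact: (proj1 (proj2_sig (constructive_indefinite_description _ ultra_ex))). Qed.
Lemma U_cone l0 : (forall s, List.In s l0 -> S s) -> U (cone l0).
Proof. move=> H; apply: (proj2 (proj2_sig (constructive_indefinite_description _ ultra_ex))); by exists l0. Qed.

Lemma US (X Y : I -> Prop) : (forall i, X i -> Y i) -> U X -> U Y.
Proof. exact: (uS U_ultra). Qed.
Lemma UI (X Y : I -> Prop) : U X -> U Y -> U (fun i => X i /\ Y i).
Proof. exact: (uI U_ultra). Qed.
Lemma UT : U (fun _ => True).
Proof. exact: (uT U_ultra). Qed.
Lemma Up (X : I -> Prop) : U X -> exists i, X i.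
Proof. exact: (uP U_ultra). Qed.
Lemma Uu (X : I -> Prop) : U X \/ U (fun i => ~ X i).
Proof. exact: (uU U_ultra). Qed.

Lemma U_iff (W X Y : I -> Prop) : U W -> (forall i, W i -> (X i <-> Y i)) -> (U X <-> U Y).
Proof.
move=> UW H; have UU := U_ultra; split => UZ.
  apply: (US (X := fun i => W i /\ X i)); last exact: UI.
  by move=> i [Wi Xi]; apply/(H i Wi).
apply: (US (X := fun i => W i /\ Y i)); last exact: UI.
by move=> i [Wi Yi]; apply/(H i Wi).
Qed.

Lemma U_fin k (X : 'I_k -> I -> Prop) : (forall j, U (X j)) -> U (fun i => forall j, X j i).
Proof.
move=> H; have UU := U_ultra.
suff: forall m, U (fun i => forall j : 'I_k, j < m -> X j i).
  move/(_ k); apply: US => // i Hi j; apply: Hi; exact: ltn_ord.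
elim=> [|m IH]; first by apply: (US (X := fun _ => True)) => // *; exact: UT.
case: (ltnP m k) => Hm.
  apply: (US (X := fun i => (forall j : 'I_k, j < m -> X j i) /\ X (Ordinal Hm) i)); last exact: UI.
  move=> i [H1 H2] j Hj; case: (ltnP j m) => Hjm; first exact: H1.
  have -> : j = Ordinal Hm by apply: val_inj => /=; lia.
  exact: H2.
apply: US IH => i Hi j _; apply: Hi; apply: leq_trans Hm; exact: ltn_ord.
Qed.

Definition Prod := forall i : I, Mi i.
Definition eqU (f g : Prod) : Prop := U (fun i => f i = g i).

Lemma eqU_refl f : eqU f f.
Proof. have UU := U_ultra; apply: (US (X := fun _ => True)) => //; exact: UT. Qed.
Lemma eqU_sym f g : eqU f g -> eqU g f.
Proof. have UU := U_ultra; by apply: US. Qed.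
Lemma eqU_trans f g h : eqU f g -> eqU g h -> eqU f h.
Proof.
have UU := U_ultra => H1 H2; apply: (US (X := fun i => f i = g i /\ g i = h i)); last exact: UI.
by move=> i [-> ->].
Qed.

Definition Ucar := {P : Prod -> Prop | exists f, P = eqU f}.
Definition cl (f : Prod) : Ucar := exist _ (eqU f) (ex_intro _ f erefl).
Definition rep (c : Ucar) : Prod := proj1_sig (constructive_indefinite_description _ (proj2_sig c)).

Lemma cl_eq f g : cl f = cl g <-> eqU f g.
Proof.
split.
  move=> E; have E' : eqU f = eqU g by exact: (f_equal (@proj1_sig _ _) E).
  rewrite E'; exact: eqU_refl.
move=> H; rewrite /cl.
have E : eqU f = eqU g.
  apply: functional_extensionality => h; apply: propositional_extensionality; split.
    move=> H'; apply: eqU_trans H'; exact: eqU_sym.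
  exact: eqU_trans.
move: (ex_intro _ f _) (ex_intro _ g _); rewrite E => p1 p2.
by rewrite (proof_irrelevance _ p1 p2).
Qed.

Lemma cl_rep c : cl (rep c) = c.
Proof.
move: c => [P pf]; rewrite /rep /=.
case: (constructive_indefinite_description _ pf) => f /= Hf; subst P.
by rewrite /cl (proof_irrelevance _ pf (ex_intro _ f erefl)).
Qed.

Lemma rep_cl f : eqU (rep (cl f)) f.
Proof. apply/cl_eq; exact: cl_rep. Qed.

Definition UP : structure L := {|
  carrier := Ucar;
  funs := fun g cs => cl (fun i => @funs L (Mi i) g (fun j => rep (cs j) i));
  rels := fun r cs => U (fun i => @rels L (Mi i) r (fun j => rep (cs j) i)) |}.

Lemma teval_UP V' (g : V' -> Prod) t :
  @teval L UP V' (fun x => cl (g x)) t = cl (fun i => teval (fun x => g x i) t).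
Proof.
elim: t => [x|f ts IH] //=.
apply/cl_eq.
apply: US (U_fin (fun j => rep_cl (fun i => teval (fun x => g x i) (ts j)))).
move=> i Hi /=; congr (funs _); apply: functional_extensionality => j; rewrite IH; exact: Hi.
Qed.

Lemma asat_UP V' (g : V' -> Prod) a :
  @asat L UP V' (fun x => cl (g x)) a <-> U (fun i => asat (fun x => g x i) a).
Proof.
case: a => [t s|r ts] /=; first by rewrite !teval_UP; exact: cl_eq.
apply: U_iff (U_fin (fun j => rep_cl (fun i => teval (fun x => g x i) (ts j)))) _.
move=> i Hi /=.
have -> // : (fun j => rep (@teval L UP V' (fun x => cl (g x)) (ts j)) i) =
             (fun j => teval (fun x => g x i) (ts j)).
apply: functional_extensionality => j; rewrite teval_UP; exact: Hi.
Qed.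

Definition updP (g : nat -> Prod) (x : nat) (h : Prod) : nat -> Prod :=
  fun y => if y == x then h else g y.

Lemma upd_cl (g : nat -> Prod) x h :
  @upd L UP (fun y => cl (g y)) x (cl h) = fun y => cl (updP g x h y).
Proof. apply: functional_extensionality => y; rewrite /upd /updP; by case: eqP. Qed.

Lemma updP_i (g : nat -> Prod) x h i :
  (fun y => updP g x h y i) = upd (fun y => g y i) x (h i).
Proof. apply: functional_extensionality => y; rewrite /upd /updP; by case: eqP. Qed.

Lemma los phi : forall g : nat -> Prod,
  @sat L UP (fun x => cl (g x)) phi <-> U (fun i => sat (fun x => g x i) phi).
Proof.
have UU := U_ultra.
have Unot : forall X : I -> Prop, U (fun i => ~ X i) -> ~ U X.
  move=> X H1 H2; have [i [H3 H4]] := Up (UI H2 H1); exact: H4.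
have Unot' : forall X : I -> Prop, ~ U X -> U (fun i => ~ X i).
  by move=> X H; case: (Uu X).
elim: phi => [a||p IHp|p IHp q IHq|p IHp q IHq|p IHp q IHq|x p IHp|x p IHp] g /=.
- exact: asat_UP.
- split => // H; by have [] := Up H.
- rewrite IHp; split; [exact: Unot' | exact: Unot].
- rewrite IHp IHq; split; first by case=> H1 H2; exact: UI.
  by move=> H; split; apply: US H => i [].
- rewrite IHp IHq; split.
    by case; apply: US => i; [left|right].
  move=> H; case: (Uu (fun i => sat (fun x => g x i) p)) => [H1|H1]; first by left.
  right; apply: (US (X := fun i => (sat (fun x => g x i) p \/ sat (fun x => g x i) q) /\
                                  ~ sat (fun x => g x i) p)); last exact: UI.
  by move=> i [[]].
- rewrite IHp IHq; split.
    move=> H; case: (Uu (fun i => sat (fun x => g x i) p)) => [H1|H1].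
      by apply: US (H H1) => i Hi _.
    by apply: US H1 => i Hi Hi'.
  move=> H H1; apply: (US (X := fun i => (sat (fun x => g x i) p -> sat (fun x => g x i) q) /\
                                  sat (fun x => g x i) p)); last exact: UI.
  by move=> i [H2 H3]; apply: H2.
- split.
    move=> H; apply: NNPP => nU; have := Unot' _ nU => H1.
    pose h : Prod := fun i => epsilon (Mi_inh i) (fun m => ~ sat (upd (fun y => g y i) x m) p).
    have := H (cl h); rewrite upd_cl IHp => H2.
    have [i [H3 H4]] := Up (UI H2 H1); apply: H4 => m; apply: NNPP => nm.
    apply: (epsilon_spec (Mi_inh i) (fun m => ~ sat (upd (fun y => g y i) x m) p)) => //.
      by exists m.
    by move: H3; rewrite updP_i.
  move=> H m; rewrite -(cl_rep m) upd_cl IHp; apply: US H => i Hi; rewrite updP_i; exact: Hi.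
- split.
    move=> [m]; rewrite -(cl_rep m) upd_cl IHp; apply: US => i Hi; rewrite updP_i in Hi.
    by eexists; exact: Hi.
  move=> H; pose h : Prod := fun i => epsilon (Mi_inh i) (fun m => sat (upd (fun y => g y i) x m) p).
  exists (cl h); rewrite upd_cl IHp; apply: US H => i Hi; rewrite updP_i.
  exact: (epsilon_spec (Mi_inh i) (fun m => sat (upd (fun y => g y i) x m) p)).
Qed.

Lemma compact_model : exists (B : structure L) (v : V -> B), model_of T B /\ forall s, S s -> lsat v s.
Proof.
have UU := U_ultra.
exists UP, (fun x => cl (fun i => @vi i x)); split.
  split.
    constructor; exact: (cl (fun i => epsilon (Mi_inh i) (fun _ => True))).
  move=> phi Tphi rho.
  have -> : rho = (fun x => cl (rep (rho x))).
    by apply: functional_extensionality => x; rewrite cl_rep.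
  apply/los; apply: (US (X := fun _ => True)) (UT) => i _.
  exact: (proj2 (proj1 (vi_spec i)) phi Tphi).
move=> [b a] Ss.
have Hc := U_cone (l0 := [:: (b, a)]) (fun s' Hs' => match Hs' with or_introl E => eq_ind _ S Ss _ E | or_intror F => match F with end end).
have Hl : U (fun i => lsat (@vi i) (b, a)).
  apply: US Hc => i Hi; apply: (proj2 (vi_spec i)); apply: Hi; by left.
rewrite /lsat /=; case: b Hl Hc Ss => /= Hl _ _.
  by apply/asat_UP.
move/asat_UP => H; have [i [H1 H2]] := Up (UI Hl H); exact: H1.
Qed.

End Compact.

Section Quot.
Variables (L : Lang) (A : structure L) (n : nat).

Notation VA := (Vars A n).

Lemma implied_mem (pi : atype A n) phi : pi phi -> implied pi phi.
Proof. by move=> H B v _ Hp; apply: Hp. Qed.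

Lemma implied_teval (pi : atype A n) t s (B : structure L) (v : VA -> B) :
  sat_diagram v -> (forall psi, pi psi -> asat v psi) -> implied pi (AEq t s) ->
  teval v t = teval v s.
Proof. by move=> Hd Hp H; apply: (H B v Hd Hp). Qed.

Lemma qrep_qclass (pi : atype A n) t : implied pi (AEq t (qrep (qclass pi t))).
Proof.
rewrite /qrep /qclass /=; case: (constructive_indefinite_description _ _) => t' /= E.
have : qeq pi t' t' by move=> B v _ _.
by rewrite -E.
Qed.

Lemma qrep_sem (pi : atype A n) t (B : structure L) (v : VA -> B) :
  sat_diagram v -> (forall psi, pi psi -> asat v psi) ->
  teval v (qrep (qclass pi t)) = teval v t.
Proof. move=> Hd Hp; symmetry; exact: (qrep_qclass t Hd Hp). Qed.

Lemma qclass_eq (pi : atype A n) t s : qclass pi t = qclass pi s <-> implied pi (AEq t s).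
Proof.
split.
  move=> E; have E' : qeq pi t = qeq pi s by exact: (f_equal (@proj1_sig _ _) E).
  change (qeq pi t s); rewrite E'; by move=> B v _ _.
move=> H; rewrite /qclass.
have E : qeq pi t = qeq pi s.
  apply: functional_extensionality => u; apply: propositional_extensionality; split.
    move=> H' B v Hd Hp /=; rewrite -(H B v Hd Hp); exact: (H' B v Hd Hp).
  move=> H' B v Hd Hp /=; rewrite (H B v Hd Hp); exact: (H' B v Hd Hp).
move: (ex_intro _ t _) (ex_intro _ s _); rewrite E => p1 p2.
by rewrite (proof_irrelevance _ p1 p2).
Qed.

Lemma qclass_qrep (pi : atype A n) (c : qcarrier pi) : qclass pi (qrep c) = c.
Proof.
move: c => [P pf]; rewrite /qrep /=.
case: (constructive_indefinite_description _ pf) => f /= Hf; subst P.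
by rewrite /qclass (proof_irrelevance _ pf (ex_intro _ f erefl)).
Qed.

Definition gen (pi : atype A n) : VA -> quotient pi := fun x => qclass pi (tvar x).

Lemma teval_gen (pi : atype A n) t : @teval L (quotient pi) VA (gen pi) t = qclass pi t.
Proof.
elim: t => [x|f ts IH] //=.
apply/qclass_eq => B v Hd Hp /=; congr (funs _); apply: functional_extensionality => j.
by rewrite IH (qrep_sem _ Hd Hp).
Qed.

Lemma asat_gen (pi : atype A n) a : @asat L (quotient pi) VA (gen pi) a <-> implied pi a.
Proof.
case: a => [t s|r ts] /=; first by rewrite !teval_gen; exact: qclass_eq.
split => H B v Hd Hp; have := H B v Hd Hp => /=;
have -> // : (fun j => teval v (qrep (@teval L (quotient pi) VA (gen pi) (ts j)))) =
             (fun j => teval v (ts j));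
apply: functional_extensionality => j; by rewrite teval_gen (qrep_sem _ Hd Hp).
Qed.

Section Ker.
Variable abar : 'I_n -> A.
Definition ker : atype A n := fun psi => asat (aval abar) psi.

Lemma diag_aval : sat_diagram (aval abar).
Proof. by move=> phi H. Qed.

Lemma ker_implied psi : implied ker psi -> ker psi.
Proof. move=> H; exact: (H A (aval abar) diag_aval (fun psi h => h)). Qed.

Definition ke (c : quotient ker) : A := teval (aval abar) (qrep c).

Lemma ke_cl t : ke (qclass ker t) = teval (aval abar) t.
Proof. exact: (ker_implied (implied_mem (implied_mem _) _) ) || exact: (qrep_sem _ diag_aval (fun psi h => h)). Qed.

Lemma ke_emb : embedding ke.
Proof.
split; [|split].
- move=> c d E; rewrite -(qclass_qrep c) -(qclass_qrep d); apply/qclass_eq.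
  by apply: implied_mem.
- move=> f cs /=; rewrite ke_cl //.
- move=> r cs /=; split; first by move/ker_implied.
  by move=> H; apply: implied_mem.
Qed.

Lemma ke_qmap a : ke (qmap ker a) = a.
Proof. by rewrite /qmap ke_cl. Qed.

Lemma ker_prime (T : theory L) : model_of T A -> strongly_prime T ker.
Proof.
move=> HA; split; [|split].
- move=> psi; exact: ker_implied.
- move=> Phi Psi HT rho HPhi.
  have [b Hb Hb'] := HT A HA (ke \o rho) (fun a Ha => proj2 (asat_emb ke_emb rho a) (HPhi a Ha)).
  exists b => //; exact: (proj1 (asat_emb ke_emb rho b) Hb').
- have [ki [kf kr]] := ke_emb; split; [|split].
  + move=> a b E; by rewrite -(ke_qmap a) -(ke_qmap b) E.
  + move=> f ms; apply: ki; rewrite ke_qmap kf.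
    congr (funs _); apply: functional_extensionality => j /=; by rewrite ke_qmap.
  + move=> r ms; rewrite kr.
    have -> // : ke \o (qmap ker \o ms) = ms.
    apply: functional_extensionality => j /=; by rewrite ke_qmap.
Qed.
End Ker.

End Quot.

Lemma agree_asat (L : Lang) (X : Type) n (M : structure L) (cs : seq X) (w : nat -> M)
  (vv : (X + 'I_n) -> M) (a : atom L (X + 'I_n)) :
  (forall x, List.In x cs -> w (idx cs x) = vv (inl x)) ->
  (forall i : 'I_n, w (size cs + i) = vv (inr i)) ->
  aall (inlP cs) a ->
  (asat w (map_atom (enc cs) a) <-> asat vv a).
Proof.
move=> H1 H2 Ha; rewrite asat_map; apply: (asat_ext (P := inlP cs)) => // [[x|i]] /= Hx.
  exact: H1.
exact: H2.
Qed.

Theorem theorem4p15 (L : Lang) (T : theory L) (A : structure L) :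
  ec_model T A ->
  forall (n : nat) (pi : seq (aformula A n)),
    let piS : atype A n := fun phi => List.In phi pi in
    forall phi : aformula A n,
      tp_a (realizations piS) phi <-> strong_radical T piS phi.
Proof.
move=> HA n pi piS phi; have [[[a0] HAT] Hec] := HA; split; last first.
  move=> Hrad abar Hreal; apply: (Hrad (ker abar)) => //; exact: ker_prime.
move=> Htp p Hsub [Hcl [HTQ Hemb]]; apply: NNPP => nphi.
pose Sg : lit L (Vars A n) -> Prop := fun s =>
  if s.1 then (exists psi : atom L A, asat id psi /\ s.2 = map_atom (@inl A 'I_n) psi) \/ List.In s.2 pi
  else (exists psi : atom L A, ~ asat id psi /\ s.2 = map_atom (@inl A 'I_n) psi) \/ s.2 = phi.
case: (classic (forall l : seq (lit L (Vars A n)), (forall s, List.In s l -> Sg s) ->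
  exists (B : structure L) (v : Vars A n -> B), model_of T B /\ forall s, List.In s l -> lsat v s)).
-
  move=> Hfin; have [B [v [HB Hv]]] := compact_model Hfin.
  pose h := fun a : A => v (inl a).
  have hemb : embedding h.
    split; [|split].
    + move=> a b E; apply: NNPP => ne.
      have := Hv (false, map_atom (@inl A 'I_n) (AEq (tvar a) (tvar b))).
      case; last by [].
      by left; exists (AEq (tvar a) (tvar b)).
    + move=> f ms.
      apply: (Hv (true, map_atom (@inl A 'I_n) (AEq (tvar (funs ms)) (tapp (fun j => tvar (ms j)))))).
      by left; exists (AEq (tvar (funs ms)) (tapp (fun j => tvar (ms j)))).
    + move=> r ms; split => H.
        apply: (Hv (true, map_atom (@inl A 'I_n) (@ARel L A r (fun j => tvar (ms j))))).
        by left; exists (@ARel L A r (fun j => tvar (ms j))).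
      apply: NNPP => nr.
      apply: (Hv (false, map_atom (@inl A 'I_n) (@ARel L A r (fun j => tvar (ms j))))) => //.
      by left; exists (@ARel L A r (fun j => tvar (ms j))).
  pose cs := List.flat_map (@aconsts L A 'I_n) (phi :: pi).
  have Hall : forall a, List.In a (phi :: pi) -> aall (inlP cs) a.
    move=> a Ha; apply: aconsts_all => x Hx; apply/List.in_flat_map; by exists a.
  pose N := size cs.
  pose phi0 := FAnd (conjs (List.map (fun a => FAtom (map_atom (enc cs) a)) pi))
                    (FNot (FAtom (map_atom (enc cs) phi))).
  have qf0 : qf phi0.
    split => //; apply: qf_conjs => f /List.in_map_iff [a [<- _]] //.
  pose rho := fun k => nth a0 cs k.
  have Hrho : forall x, List.In x cs -> rho (idx cs x) = x.
    move=> x Hx; exact: nth_idx.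
  have Hsat : sat (h \o rho) (exs N n phi0).
    apply/sat_exs; exists (ext N (fun i => v (inr i)) (h \o rho)); split.
      move=> y /orP [Hy|Hy]; [exact: ext_lt | exact: ext_ge].
    have ag : forall a, List.In a (phi :: pi) ->
        (asat (ext N (fun i => v (inr i)) (h \o rho)) (map_atom (enc cs) a) <-> asat v a).
      move=> a Ha; apply: agree_asat; last exact: Hall.
        move=> x Hx; rewrite ext_lt; last exact: idx_lt.
        by rewrite /= Hrho.
      move=> i; exact: ext_in.
    split.
      apply/sat_conjs => f /List.in_map_iff [a [<- Ha]] /=.
      apply/(ag a); first by right.
      apply: (Hv (true, a)); rewrite /Sg /=; by right.
    move=> /(ag phi (or_introl erefl)); apply: (Hv (false, phi)); rewrite /Sg /=; by right.
  have := Hec B h HB hemb (exs N n phi0) rho (exs_existential N n qf0) Hsat.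
  move/sat_exs => [w [Hw [Hpi Hphi]]].
  pose abar := fun i : 'I_n => w (N + i).
  have ag2 : forall a, List.In a (phi :: pi) ->
      (asat w (map_atom (enc cs) a) <-> asat (aval abar) a).
    move=> a Ha; apply: agree_asat; last exact: Hall.
      move=> x Hx; rewrite Hw /=; first exact: Hrho.
      by rewrite idx_lt.
    by [].
  apply: Hphi; apply/(ag2 phi (or_introl erefl)); apply: Htp.
  move=> psi Hpsi; apply/(ag2 psi (or_intror Hpsi)).
  apply: (proj1 (sat_conjs _ _) Hpi (FAtom (map_atom (enc cs) psi))).
  apply/List.in_map_iff; by exists psi.
- move=> Hnot; have [l Hl] := not_all_ex_not _ _ Hnot.
  have [HlS Hno] := imply_to_and _ _ Hl.
  pose cs := List.flat_map (fun s : lit L (Vars A n) => aconsts s.2) l.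
  have Hall : forall s, List.In s l -> aall (inlP cs) s.2.
    move=> s Hs; apply: aconsts_all => x Hx; apply/List.in_flat_map; by exists s.
  pose Phi' := List.map (fun s : lit L (Vars A n) => map_atom (enc cs) s.2) (List.filter (fun s => s.1) l).
  pose Psi' := List.map (fun s : lit L (Vars A n) => map_atom (enc cs) s.2) (List.filter (fun s => ~~ s.1) l).
  have HTf : T_forall T Phi' Psi'.
    move=> M HM rho HPhi; apply: NNPP => nPsi; apply: Hno; exists M, (rho \o enc cs); split => //.
    move=> [b a] Hin; rewrite /lsat /=; case: b Hin => Hin.
      apply/asat_map; apply: HPhi; apply/List.in_map_iff; exists (true, a); split => //.
      by apply/List.filter_In.
    move/asat_map => H; apply: nPsi; exists (map_atom (enc cs) a) => //.
    apply/List.in_map_iff; exists (false, a); split => //.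
    by apply/List.filter_In.
  pose N := size cs.
  pose rhoQ := ext N (fun i => gen p (inr i)) (fun k => qmap p (nth a0 cs k)).
  have agQ : forall s, List.In s l -> (asat rhoQ (map_atom (enc cs) s.2) <-> p s.2).
    move=> s Hs; rewrite (agree_asat (vv := gen p)); last exact: Hall.
    + rewrite asat_gen; split; [exact: Hcl | exact: implied_mem].
    + move=> x Hx; rewrite /rhoQ ext_lt; last exact: idx_lt.
      by rewrite nth_idx.
    + move=> i; exact: ext_in.
  have HPhiQ : forall a, List.In a Phi' -> asat rhoQ a.
    move=> x /List.in_map_iff [[bb a] [<- /List.filter_In [Hin Hbb]]] /=.
    simpl in Hbb; subst bb.
    apply/(agQ _ Hin) => /=.
    have := HlS _ Hin; rewrite /Sg /= => [[[psi [Hpsi ->]] | Hpi]].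
      apply: Hcl => B v Hd Hp; apply/asat_map; exact: Hd.
    exact: Hsub.
  have [b Hb Hbsat] := HTQ _ _ HTf rhoQ HPhiQ.
  move: Hb => /List.in_map_iff [[bb a] [Eb /List.filter_In [Hin Hbb]]].
  case: bb Eb Hin Hbb => // Eb Hin _.
  subst b; have := proj1 (agQ _ Hin) Hbsat => /= Hpa.
  have := HlS _ Hin; rewrite /Sg /= => [[[psi [Hpsi Ea]] | Ea]]; last by apply: nphi; rewrite -Ea.
  apply: Hpsi; subst a.
  have := proj2 (asat_gen p _) (implied_mem Hpa) => /asat_map H.
  exact: (proj1 (asat_emb Hemb id psi) H).
Qed.
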